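(* Let $X$ be a graph (multiple edges and loops allowed) which is connected, has countable vertex set, has bounded degree, and has no vertex of degree one. Fix a vertex $x_0\in VX$. For $x\in VX$ and $m\ge 1$ let $c_m(x)$ be the number of geodesic loops of length $m$ starting at $x$, and let $N_m(x_0)$ be the number of closed geodesic paths of length $m$ starting at $x_0$. Define formal power series $C(u:x)=\sum_{m=1}^\infty c_m(x)u^m$ for $x\in VX$ and $N(u:x_0)=\sum_{m=1}^\infty N_m(x_0)u^m$, and set (coefficientwise) $(\Delta_X C(u:\cdot))(x_0)=\deg(x_0)C(u:x_0)-\sum_{e\in E_{x_0}}C(u:t(e))$. Then, as formal power series in $u$, $$N(u:x_0)=(1-u^2)^{-2}\{1-(\deg(x_0)-\Delta_X)u^2+(\deg(x_0)-1)u^4\}C(u:\cdot)(x_0),$$ that is, $$N(u:x_0)=(1-u^2)^{-2}\Big[\big(1-\deg(x_0)u^2+(\deg(x_0)-1)u^4\big)C(u:x_0)+u^2(\Delta_X C(u:\cdot))(x_0)\Big].$$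
   Context: A graph $X=(VX,EX)$ consists of disjoint sets $VX$, $EX$ with maps $e\mapsto (o(e),t(e))\in VX\times VX$ and $e\mapsto\bar e$ such that $\bar e\ne e$, $\bar{\bar e}=e$, $o(e)=t(\bar e)$. For $x\in VX$, $E_x=\{e\in EX: o(e)=x\}$ and $\deg(x)=|E_x|$; bounded degree means $\sup_x\deg(x)<\infty$. A path of length $n$ is a sequence of edges $c=(e_1,\dots,e_n)$ with $t(e_i)=o(e_{i+1})$; $o(c)=o(e_1)$, $t(c)=t(e_n)$; it is closed if $o(c)=t(c)$. It has a back-tracking if $e_{i+1}=\bar e_i$ for some $i$, and has a tail if $e_n=\bar e_1$. A geodesic loop is a closed path without back-tracking; a closed geodesic path is a geodesic loop without tail. ''Starting at $x$'' means $o(c)=x$. *)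

(* Defs.v *)
From HB Require Import structures.
From mathcomp Require Import all_boot all_order all_algebra.
Set Implicit Arguments. Unset Strict Implicit. Unset Printing Implicit Defensive.
Import Order.TTheory GRing.Theory Num.Theory.

(* A (Serre) graph X = (VX, EX, o, t, bar) in which every vertex has finitely
   many outgoing edges; [star x] is a duplicate-free list of E_x = {e | o e = x}.
   Loops and multiple edges are allowed. *)
Record graph := Graph {
  vert : countType;
  edge : eqType;
  org : edge -> vert;
  ter : edge -> vert;
  rev : edge -> edge;
  star : vert -> seq edge;
  rev_neq : forall e, rev e != e;
  revK : forall e, rev (rev e) = e;
  org_rev : forall e, org e = ter (rev e);
  star_uniq : forall x, uniq (star x);
  star_mem : forall x e, (e \in star x) = (org e == x)
}.

Section Paths.
Variable X : graph.
Local Notation V := (vert X).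
Local Notation E := (edge X).

Definition deg (x : V) : nat := size (star x).

Fixpoint walks (m : nat) (x : V) : seq (seq E) :=
  match m with
  | 0 => [:: [::]]
  | m'.+1 => flatten [seq [seq e :: p | p <- walks m' (ter e)] | e <- star x]
  end.

Definition term (x : V) (p : seq E) : V := last x (map (@ter X) p).

Fixpoint no_backtrack (p : seq E) : bool :=
  match p with
  | e1 :: ((e2 :: _) as q) => (e2 != rev e1) && no_backtrack q
  | _ => true
  end.

Definition has_tail (p : seq E) : bool :=
  match p with
  | e1 :: _ => last e1 p == rev e1
  | [::] => false
  end.

Definition geodesic_loop (x : V) (p : seq E) : bool :=
  (term x p == x) && no_backtrack p.

Definition closed_geodesic (x : V) (p : seq E) : bool :=
  geodesic_loop x p && ~~ has_tail p.

Definition c_num (m : nat) (x : V) : nat := count (geodesic_loop x) (walks m x).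
Definition N_num (m : nat) (x : V) : nat := count (closed_geodesic x) (walks m x).

Definition connected : Prop :=
  forall x y : V, exists m, exists2 p, p \in walks m x & term x p = y.

Definition bounded_degree : Prop := exists D, forall x : V, deg x <= D.

End Paths.

Definition fps := nat -> int.
Local Open Scope ring_scope.
Definition fps_add (a b : fps) : fps := fun n => a n + b n.
Definition fps_mul (a b : fps) : fps :=
  fun n => \sum_(i < n.+1) a i * b (n - i)%N.
(* polynomial given by its list of coefficients (constant term first) *)
Definition fps_poly (s : seq int) : fps := fun n => nth 0 s n.

Definition Cser (X : graph) (x : vert X) : fps :=
  fun n => if n == 0%N then 0 else (c_num n x)%:Z.
Definition Nser (X : graph) (x : vert X) : fps :=
  fun n => if n == 0%N then 0 else (N_num n x)%:Z.

Definition DeltaC (X : graph) (x : vert X) : fps :=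
  fun n => (deg x)%:Z * Cser x n - \sum_(e <- star x) Cser (ter e) n.

(* Main.v *)
Require Import Defs.
From mathcomp Require Import all_boot all_order all_algebra zify.
Set Implicit Arguments. Unset Strict Implicit. Unset Printing Implicit Defensive.

Notation rv := Defs.rev.

Lemma rvK (X : graph) (e : edge X) : rv (rv e) = e.
Proof. exact: Defs.revK. Qed.

Lemma rv_inj (X : graph) : injective (@Defs.rev X).
Proof. by move=> a b h; rewrite -(rvK a) h rvK. Qed.

Lemma neq_rv (X : graph) (a b : edge X) : (a != rv b) = (b != rv a).
Proof.
by apply/idP/idP; apply: contra => /eqP h; apply/eqP; rewrite h rvK.
Qed.

Lemma rv_neq' (X : graph) (e : edge X) : (e == rv e) = false.
Proof. by apply/negbTE; rewrite eq_sym; exact: rev_neq. Qed.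

Lemma org_rv (X : graph) (e : edge X) : org (rv e) = ter e.
Proof. by rewrite Defs.org_rev rvK. Qed.

Lemma ter_rv (X : graph) (e : edge X) : ter (rv e) = org e.
Proof. by rewrite Defs.org_rev. Qed.

Lemma sum_pick (T : eqType) (s : seq T) (a : T) (G : T -> bool) :
  uniq s -> \sum_(f <- s) ((f == a) && G f) = ((a \in s) && G a).
Proof.
elim: s => [|h t IH] /=; first by rewrite big_nil.
case/andP=> ht ut; rewrite big_cons IH // in_cons.
case: (eqVneq h a) ht => [->|ha] ht /=.
  by rewrite (negbTE ht) /= addn0.
by [].
Qed.

Lemma count_sum (T : Type) (P : pred T) (s : seq T) :
  count P s = \sum_(p <- s) P p.
Proof. by elim: s => [|h t IH] /=; rewrite ?big_nil ?big_cons ?IH. Qed.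

Lemma walks_first (X : graph) (F : seq (edge X) -> nat) m (x : vert X) :
  \sum_(p <- walks m.+1 x) F p =
  \sum_(e <- star x) \sum_(q <- walks m (ter e)) F (e :: q).
Proof.
rewrite /= big_flatten big_map; apply: eq_bigr => e _; by rewrite big_map.
Qed.

Lemma term_cons (X : graph) (x : vert X) e p : term x (e :: p) = term (ter e) p.
Proof. by []. Qed.

Lemma walks_last (X : graph) (F : seq (edge X) -> nat) m (x : vert X) :
  \sum_(p <- walks m.+1 x) F p =
  \sum_(p <- walks m x) \sum_(e <- star (term x p)) F (rcons p e).
Proof.
elim: m x F => [|m IH] x F.
  rewrite walks_first /= big_cons big_nil addn0.
  by apply: eq_bigr => e _; rewrite big_cons big_nil addn0.
rewrite walks_first [in RHS]walks_first.
by apply: eq_bigr => e _; rewrite IH.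
Qed.

Lemma walks_mem (X : graph) m (x : vert X) p :
  p \in walks m x -> size p = m /\ (forall h t, p = h :: t -> org h = x).
Proof.
elim: m x p => [|m IH] x p /=.
  by rewrite inE => /eqP ->.
case/flattenP=> s /mapP [e ein ->] /mapP [q qin ->].
have [sq _] := IH _ _ qin; split; first by rewrite /= sq.
by move=> h t [<- _]; apply/eqP; rewrite -star_mem.
Qed.

Lemma nb_cons (X : graph) (e : edge X) q :
  no_backtrack (e :: q) = (head e q != rv e) && no_backtrack q.
Proof. by case: q => [|h t] /=; rewrite // eq_sym Defs.rev_neq. Qed.

Lemma nb2 (X : graph) (a b : edge X) s :
  no_backtrack (a :: b :: s) = (b != rv a) && no_backtrack (b :: s).
Proof. by []. Qed.

Lemma nb_rcons (X : graph) (q : seq (edge X)) f :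
  no_backtrack (rcons q f) = no_backtrack q && (f != rv (last f q)).
Proof.
elim: q => [|h t IH]; first by rewrite /= eq_sym Defs.rev_neq.
case: t IH => [|h2 t2] IH; first by rewrite /= andbT.
by rewrite rcons_cons rcons_cons nb2 -rcons_cons IH nb2 andbA.
Qed.

Lemma term_last (X : graph) (x : vert X) h t : term x (h :: t) = ter (last h t).
Proof. by rewrite /term /= last_map. Qed.

Lemma term_rcons (X : graph) (x : vert X) q f : term x (rcons q f) = ter f.
Proof. by rewrite /term map_rcons last_rcons. Qed.

Lemma big_pick (T : eqType) (s : seq T) (a : T) (G : T -> nat) :
  uniq s -> \sum_(f <- s | f == a) G f = if a \in s then G a else 0.
Proof.
elim: s => [|h t IH] /=; first by rewrite big_nil.
case/andP=> ht ut; rewrite big_cons IH // in_cons.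
case: (eqVneq h a) ht => [->|ha] ht /=; last by [].
by rewrite (negbTE ht) addn0.
Qed.

Lemma sum_if (T : Type) (s : seq T) (b : bool) (P : T -> bool) :
  \sum_(r <- s) (b && P r) = if b then \sum_(r <- s) P r else 0.
Proof. by case: b => //; rewrite big1. Qed.

Lemma reindex_star (X : graph) (x z : vert X) (H : edge X -> bool) :
  \sum_(e <- star x) ((ter e == z) && H e) =
  \sum_(f <- star z) ((ter f == x) && H (rv f)).
Proof.
have conv : forall (y w : vert X) (K : edge X -> bool),
   \sum_(e <- star y) ((ter e == w) && K e) =
   \sum_(e <- [seq e <- star y | ter e == w]) K e.
  move=> y w K; rewrite big_filter [RHS]big_mkcond /=.
  by apply: eq_bigr => e _; case: (ter e == w).
rewrite !conv.
rewrite (_ : \sum_(e <- [seq f <- star z | ter f == x]) H (rv e) =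
    \sum_(e <- map (@Defs.rev X) [seq f <- star z | ter f == x]) H e); last by rewrite big_map.
apply: perm_big; apply: uniq_perm.
- by rewrite filter_uniq // star_uniq.
- by rewrite (map_inj_uniq (@rv_inj X)) filter_uniq // star_uniq.
move=> e; rewrite -{2}(rvK e) (mem_map (@rv_inj X)) !mem_filter !star_mem.
by rewrite org_rv ter_rv andbC.
Qed.

Lemma count_two (T : eqType) (s : seq T) a b : uniq s -> a \in s -> b \in s ->
  \sum_(e <- s) ((a != e) && (e != b)) + (a != b) + 1 = size s.
Proof.
move=> us ains bins.
have pt : forall e, ((a != e) && (e != b) : nat) + (e == a) + (e == b) =
   1 + ((e == a) && (e == b)).
  move=> e; rewrite (eq_sym a e).
  by case: (e == a); case: (e == b).
have H1 : \sum_(e <- s) (((a != e) && (e != b) : nat) + (e == a) + (e == b)) =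
          \sum_(e <- s) (1 + ((e == a) && (e == b) : nat)) by apply: eq_bigr => e _; exact: pt.
rewrite !big_split /= in H1.
rewrite -!count_sum in H1.
have ca : count (eq_op^~ a) s = 1 by have := count_uniq_mem a us; rewrite ains; apply.
have cb : count (eq_op^~ b) s = 1 by have := count_uniq_mem b us; rewrite bins; apply.
rewrite ca cb in H1.
have c1 : \sum_(e <- s) 1 = size s by rewrite sum1_size.
rewrite c1 in H1.
case: (eqVneq a b) H1 => [<-|ab] H1.
  have : count (fun e => (e == a) && (e == a)) s = 1.
    by rewrite -ca; apply: eq_count => e; rewrite andbb.
  move=> c2; rewrite c2 in H1; rewrite -count_sum /=; lia.
have : count (fun e => (e == a) && (e == b)) s = 0.
  apply/eqP; rewrite -leqn0 leqNgt -has_count; apply/hasP => -[e _ /andP[/eqP-> /eqP]].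
  by move/eqP: ab.
move=> c2; rewrite c2 in H1; rewrite -count_sum /=; lia.
Qed.

Definition Aq (X : graph) (e : edge X) (q : seq (edge X)) := head e q != rv e.
Definition Bq (X : graph) (e : edge X) (q : seq (edge X)) := last (rv e) q != e.

Lemma pt1 (X : graph) (x : vert X) e h t f : org e = x -> org f = term (ter e) (h::t) ->
  (geodesic_loop x (e :: rcons (h::t) f) && has_tail (e :: rcons (h::t) f)) =
  (f == rv e) && (geodesic_loop (ter e) (h::t) && Aq e (h::t) && Bq e (h::t)).
Proof.
move=> oe hf; rewrite /has_tail /= last_rcons -rcons_cons.
case: (eqVneq f (rv e)) hf => [->|] hf; last by rewrite andbF.
rewrite /geodesic_loop term_cons term_rcons ter_rv oe eqxx nb_cons nb_rcons /Aq /Bq.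
rewrite -hf org_rv eqxx (inj_eq (@rv_inj X)) [_ == e]eq_sym /=.
by case: (h != rv e); case: (e != last h t); rewrite /= ?andbT ?andbF.
Qed.

Definition T1 (X : graph) k (x : vert X) := \sum_(e <- star x) \sum_(q <- walks k (ter e))
   (geodesic_loop (ter e) q && Aq e q && Bq e q).
Definition T2 (X : graph) k (x : vert X) := \sum_(e <- star x) \sum_(q <- walks k (ter e))
   (geodesic_loop (ter e) q && ~~ Aq e q && Bq e q).
Definition T3 (X : graph) k (x : vert X) := \sum_(e <- star x) \sum_(q <- walks k (ter e))
   (geodesic_loop (ter e) q && Aq e q && ~~ Bq e q).
Definition T4 (X : graph) k (x : vert X) := \sum_(e <- star x) \sum_(q <- walks k (ter e))
   (geodesic_loop (ter e) q && ~~ Aq e q && ~~ Bq e q).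

Lemma split_c (X : graph) k (x : vert X) :
  \sum_(e <- star x) c_num k (ter e) = T1 k x + T2 k x + T3 k x + T4 k x.
Proof.
rewrite /T1 /T2 /T3 /T4 -!big_split; apply: eq_bigr => e _.
rewrite /c_num count_sum -!big_split; apply: eq_bigr => q _ /=.
by case: (geodesic_loop _ _); case: (Aq e q); case: (Bq e q).
Qed.

Lemma T1_eq (X : graph) j (x : vert X) :
  T1 j.+1 x + N_num j.+3 x = c_num j.+3 x.
Proof.
have -> : c_num j.+3 x = \sum_(p <- walks j.+3 x) (geodesic_loop x p && has_tail p)
     + N_num j.+3 x.
  rewrite /c_num /N_num !count_sum -big_split; apply: eq_bigr => p _ /=.
  rewrite /closed_geodesic; by case: (geodesic_loop x p); case: (has_tail p).
congr (_ + _).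
rewrite walks_first /T1; apply: eq_big_seq => e; rewrite star_mem => /eqP oe.
rewrite [RHS]walks_last; apply: eq_big_seq => q /walks_mem [sq _].
case: q sq => [|h t] // _.
rewrite (eq_big_seq (fun f => (f == rv e) &&
    (geodesic_loop (ter e) (h::t) && Aq e (h::t) && Bq e (h::t)) : nat)); last first.
  by move=> f; rewrite star_mem => /eqP hf; rewrite -rcons_cons (pt1 oe hf).
rewrite sum_pick ?star_uniq // star_mem org_rv.
rewrite /geodesic_loop eq_sym; by case: (ter e == term (ter e) (h :: t)).
Qed.

Lemma pt2 (X : graph) (x : vert X) r f :
  (ter f == x) && (no_backtrack (rv (rv f) :: r) && Bq (rv f) (rv (rv f) :: r)) =
  closed_geodesic x (rcons r f).
Proof.
rewrite /Bq rvK nb_cons /closed_geodesic /geodesic_loop term_rcons nb_rcons /=.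
case: r => [|h t] /=.
  by rewrite rv_neq'; case: (ter f == x).
rewrite last_rcons (neq_rv f (last h t)) (neq_rv h f).
case: (ter f == x); case: (h != rv f); case: (last h t != rv f); rewrite /= ?andbT ?andbF.
all: by case: (f != rv h); rewrite ?andbT ?andbF.
Qed.

Lemma T2_eq (X : graph) j (x : vert X) : T2 j.+1 x = N_num j.+1 x.
Proof.
rewrite /T2.
rewrite (eq_big_seq (fun e => \sum_(r <- walks j x)
   (geodesic_loop (ter e) (rv e :: r) && Bq e (rv e :: r)))); last first.
  move=> e; rewrite star_mem => /eqP oe.
  rewrite walks_first.
  rewrite (eq_bigr (fun g => if g == rv e then \sum_(r <- walks j (ter g))
        (geodesic_loop (ter e) (g :: r) && Bq e (g :: r)) else 0)); last first.
    move=> g _; rewrite -sum_if; apply: eq_bigr => r _.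
    by rewrite /Aq /= negbK; case: (g == rv e); rewrite ?andbT ?andbF.
  by rewrite -big_mkcond big_pick ?star_uniq // star_mem org_rv eqxx ter_rv oe.
rewrite exchange_big /N_num count_sum walks_last; apply: eq_bigr => r _.
rewrite (eq_big_seq (fun e => (ter e == term x r) &&
   (no_backtrack (rv e :: r) && Bq e (rv e :: r)) : nat)); last first.
  move=> e; rewrite star_mem => /eqP oe.
  by rewrite /geodesic_loop term_cons ter_rv oe eq_sym -andbA.
rewrite (@reindex_star X x (term x r)
   (fun e => no_backtrack (rv e :: r) && Bq e (rv e :: r))).
by apply: eq_bigr => f _; rewrite pt2.
Qed.

Lemma head_rcons_same (T : Type) (e : T) r : head e (rcons r e) = head e r.
Proof. by case: r. Qed.

Lemma pt3 (X : graph) (x : vert X) e r :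
  (x == term (ter e) r) && (geodesic_loop (ter e) (rcons r e) && Aq e (rcons r e)) =
  closed_geodesic x (e :: r).
Proof.
rewrite /geodesic_loop term_rcons eqxx nb_rcons /Aq head_rcons_same.
rewrite /closed_geodesic /geodesic_loop term_cons nb_cons /has_tail /=.
rewrite (neq_rv e (last e r)) [x == _]eq_sym.
case: (term _ r == x); case: (head e r != rv e); case: (last e r != rv e);
  by rewrite /= ?andbT ?andbF.
Qed.

Lemma T3_eq (X : graph) j (x : vert X) : T3 j.+1 x = N_num j.+1 x.
Proof.
rewrite /T3 /N_num count_sum walks_first; apply: eq_big_seq => e.
rewrite star_mem => /eqP oe.
rewrite [LHS]walks_last; apply: eq_bigr => r _.
rewrite (eq_bigr (fun g => ((g == e) &&
   (geodesic_loop (ter e) (rcons r e) && Aq e (rcons r e)) : nat))); last first.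
  move=> g _; rewrite /Bq last_rcons negbK.
  by case: (eqVneq g e) => [->|]; rewrite ?andbT ?andbF.
by rewrite sum_pick ?star_uniq // star_mem oe pt3.
Qed.

Lemma T4_1 (X : graph) (x : vert X) : T4 1 x = 0.
Proof.
rewrite /T4 big1 // => e _; rewrite walks_first big1 // => g _.
rewrite /= big_cons big_nil addn0 /Aq /Bq /= !negbK.
case: (eqVneq g (rv e)) => [->|]; last by rewrite andbF.
by rewrite (negbTE (Defs.rev_neq e)) andbF.
Qed.

Lemma T4_red (X : graph) m (x : vert X) :
  T4 m.+2 x = \sum_(e <- star x) \sum_(s <- walks m x)
     ((x == term x s) && geodesic_loop (ter e) (rv e :: rcons s e)).
Proof.
rewrite /T4; apply: eq_big_seq => e; rewrite star_mem => /eqP oe.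
rewrite walks_first.
rewrite (eq_bigr (fun g => if g == rv e then \sum_(r <- walks m.+1 (ter g))
      (geodesic_loop (ter e) (g :: r) && ~~ Bq e (g :: r)) else 0)); last first.
  move=> g _; rewrite -sum_if; apply: eq_bigr => r _.
  by rewrite /Aq /= negbK; case: (g == rv e); rewrite ?andbT ?andbF.
rewrite -big_mkcond big_pick ?star_uniq // star_mem org_rv eqxx ter_rv oe.
rewrite walks_last; apply: eq_bigr => s _.
rewrite (eq_bigr (fun h => ((h == e) &&
   geodesic_loop (ter e) (rv e :: rcons s e)) : nat)); last first.
  move=> h _; rewrite /Bq /= last_rcons negbK.
  by case: (eqVneq h e) => [->|]; rewrite ?andbT ?andbF.
by rewrite sum_pick ?star_uniq // star_mem oe.
Qed.

Lemma T4_2 (X : graph) (x : vert X) : T4 2 x = 0.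
Proof.
rewrite T4_red big1 // => e _ /=; rewrite big_cons big_nil addn0.
by rewrite /geodesic_loop /= rvK eqxx !andbF.
Qed.

Lemma mul_sum (T : Type) (s : seq T) (d : nat) (F : T -> nat) :
  d * \sum_(p <- s) F p = \sum_(p <- s) d * F p.
Proof.
elim: s => [|h t IH]; first by rewrite !big_nil muln0.
by rewrite !big_cons mulnDr IH.
Qed.

Lemma T4_S (X : graph) m (x : vert X) :
  T4 m.+3 x + N_num m.+1 x + c_num m.+1 x = deg x * c_num m.+1 x.
Proof.
rewrite T4_red.
have -> : \sum_(e <- star x) \sum_(s <- walks m.+1 x)
     ((x == term x s) && geodesic_loop (ter e) (rv e :: rcons s e)) =
   \sum_(s <- walks m.+1 x) \sum_(e <- star x)
     ((x == term x s) && geodesic_loop (ter e) (rv e :: rcons s e)).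
  exact: exchange_big.
rewrite /N_num /c_num !count_sum mul_sum -!big_split.
apply: eq_big_seq => s /walks_mem [sz hs].
case: s sz hs => [|h t] // _ hs; have oh := hs h t erefl.
rewrite (eq_bigr (fun e => ((x == term x (h :: t)) && no_backtrack (h :: t)) &&
    ((h != e) && (e != rv (last h t))) : nat)); last first.
  move=> e _; rewrite /geodesic_loop (term_cons (ter e)) term_rcons eqxx nb_cons nb_rcons.
  rewrite [head _ _]/= [last e _]/= rvK.
  move: (no_backtrack (h :: t)) => b.
  by case: (x == _); case: b; case: (h != e); case: (e != _).
rewrite sum_if /closed_geodesic /geodesic_loop [x == _]eq_sym.
have -> : has_tail (h :: t) = (last h t == rv h) by [].
move: (no_backtrack (h :: t)) => b.
case E: (term x (h :: t) == x); last by rewrite /= muln0.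
case: b; last by rewrite /= muln0.
rewrite /= muln1 (neq_rv (last h t) h) /deg.
apply: count_two; first exact: star_uniq.
  by rewrite star_mem oh.
by rewrite star_mem org_rv -(term_last x) E.
Qed.

Import GRing.Theory Num.Theory.

Lemma small_eq (X : graph) (x : vert X) p : size p <= 2 ->
  closed_geodesic x p = geodesic_loop x p.
Proof.
rewrite /closed_geodesic /geodesic_loop.
case: p => [|a [|b [|c q]]] //= _.
- by rewrite !andbT.
- by rewrite rv_neq' !andbT.
- by case: (b != rv a); rewrite ?andbT ?andbF.
Qed.

Lemma N_small (X : graph) (x : vert X) k : k <= 2 -> N_num k x = c_num k x.
Proof.
move=> hk; rewrite /N_num /c_num; apply: eq_in_count => p /walks_mem [sp _].
by apply: small_eq; rewrite sp.
Qed.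

Lemma key (X : graph) (x : vert X) j :
  \sum_(e <- star x) c_num j.+1 (ter e) + N_num j.+3 x =
  c_num j.+3 x + N_num j.+1 x + N_num j.+1 x + T4 j.+1 x.
Proof.
rewrite split_c -T1_eq T2_eq T3_eq; lia.
Qed.

Local Open Scope ring_scope.

Lemma sumZ (T : Type) (s : seq T) (F : T -> nat) :
  \sum_(e <- s) ((F e)%:Z) = (\sum_(e <- s) F e)%N%:Z.
Proof.
elim: s => [|h t IH]; first by rewrite !big_nil.
by rewrite !big_cons IH PoszD.
Qed.

Lemma sum5 (F : nat -> int) n :
  \sum_(i < n.+4.+1) F i = F 0%N + F 1%N + F 2%N + F 3%N + F 4%N + \sum_(5 <= i < n.+4.+1) F i.
Proof.
rewrite -(big_mkord xpredT F) big_ltn // big_ltn // big_ltn // big_ltn // big_ltn //.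
by rewrite !addrA.
Qed.

Lemma rest0 (s : seq int) (a : fps) n : (size s <= 5)%N ->
  \sum_(5 <= i < n.+4.+1) fps_poly s i * a (n.+4 - i)%N = 0.
Proof.
move=> hs; rewrite big_nat_cond big1 // => i /andP [/andP [hi _] _].
by rewrite /fps_poly nth_default ?mul0r //; apply: leq_trans hs hi.
Qed.

Lemma expand5 (s : seq int) (a : fps) n : (size s <= 5)%N ->
  fps_mul (fps_poly s) a n.+4 =
  s`_0 * a n.+4 + s`_1 * a n.+3 + s`_2 * a n.+2 + s`_3 * a n.+1 + s`_4 * a n.
Proof.
move=> hs; rewrite /fps_mul.
rewrite (sum5 (fun i => fps_poly s i * a (n.+4 - i)%N)) rest0 // addr0.
by rewrite !subSS !subn0.
Qed.

Theorem theorem3p1 (X : graph) (x0 : vert X) :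
  connected X -> bounded_degree X -> (forall x : vert X, deg x <> 1%N) ->
  forall n : nat,
    fps_mul (fps_poly [:: 1; 0; -2; 0; 1]) (Nser x0) n =
    fps_add
      (fps_mul (fps_poly [:: 1; 0; - (deg x0)%:Z; 0; (deg x0)%:Z - 1])
               (Cser x0))
      (fps_mul (fps_poly [:: 0; 0; 1]) (DeltaC x0)) n.
Proof.
move=> _ _ _ n.
rewrite /fps_add.
case: n => [|[|[|[|n]]]].
- rewrite /fps_mul !big_ord_recr !big_ord0 /= /DeltaC /Cser /Nser /= ?subSS ?subn0 ?big1_eq.
  lia.
- rewrite /fps_mul !big_ord_recr !big_ord0 /= /DeltaC /Cser /Nser /= ?subSS ?subn0 ?big1_eq /=.
  rewrite N_small //; lia.
- rewrite /fps_mul !big_ord_recr !big_ord0 /= /DeltaC /Cser /Nser /= ?subSS ?subn0 ?big1_eq /=.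
  rewrite N_small //; lia.
- rewrite /fps_mul !big_ord_recr !big_ord0 /= /DeltaC /Cser /Nser /= ?subSS ?subn0 ?big1_eq /=.
  have K := key x0 0; rewrite T4_1 in K.
  rewrite !sumZ; lia.
rewrite !expand5 //= /DeltaC /Cser /Nser /=.
case: n => [|m] /=.
  have K := key x0 1; rewrite T4_2 in K.
  rewrite !sumZ; lia.
have K := key x0 m.+2; have K2 := T4_S m x0.
rewrite !sumZ; nia.
Qed.
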